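(* (1) If $G$ is a finite $2$-group with a cyclic subgroup of index $4$, then $G''\leq Z(G)$. (2) If $G$ is a finite group of order $2^{\alpha}3^{\beta}$ (with $\alpha,\beta\ge 0$) having a cyclic subgroup of index less than $6$, then $G''\leq Z(G)$.
   Context: $G''=[G',G']$ is the second derived subgroup and $Z(G)$ is the center of $G$. *)

(* Defs.v *)
From mathcomp Require Import all_boot all_fingroup all_solvable.

(* Main.v *)
Require Import Defs.
From mathcomp Require Import all_boot all_fingroup all_solvable.
From mathcomp Require Import zify.
Set Implicit Arguments.
Unset Strict Implicit.
Unset Printing Implicit Defensive.
Local Open Scope group_scope.


Lemma der1_cent_cyclic (gT : finGroupType) (G N : {group gT}) :
  G \subset 'N(N) -> cyclic N -> G^`(1) \subset 'C(N).
Proof.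
move=> nNG cN.
have sG'N : G^`(1) \subset 'N(N) by apply: subset_trans nNG; apply: der_sub.
rewrite -ker_conj_aut -sub_morphim_pre //.
rewrite morphim_der //.
rewrite -(derG1P (Aut_cyclic_abelian cN)).
exact: dergS (Aut_conj_aut N G).
Qed.

Lemma final_step (gT : finGroupType) (G N : {group gT}) (K : {group coset_of N}) :
  N <| G -> cyclic N -> (G / N)^`(1) \subset K -> abelian K ->
  (cyclic K \/ exponent K %| 2) -> [~: G^`(1), G^`(1)] \subset 'Z(G).
Proof.
move=> /andP[sNG nNG] cN sG'K aK hK.
set H := G^`(1).
have sHG : H \subset G by apply: der_sub.
have nNH : H \subset 'N(N) by apply: subset_trans nNG.
have cHN : H \subset 'C(N) by apply: der1_cent_cyclic.
have sHNK : H / N \subset K by rewrite /H quotient_der.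
case: hK => [cK | eK].
  have cHN' : cyclic (H / N) by apply: cyclicS cK.
  have cH' : cyclic (H / (N :&: H)) by rewrite (isog_cyclic (second_isog nNH)).
  have aH : abelian H.
    apply: cyclic_factor_abelian cH'.
    rewrite subsetI subsetIr /= (subset_trans (subsetIl _ _)) //.
    by rewrite centsC.
  by rewrite (commG1P aH) sub1G.
have sH'N : [~: H, H] \subset N.
  by apply: der1_min nNH (abelianS sHNK aK).
have sqN : forall x, x \in H -> x ^+ 2 \in N.
  move=> x Hx; have Nx : x \in 'N(N) by apply: (subsetP nNH).
  apply: coset_idr; first by rewrite groupX.
  rewrite morphX //; apply: (exponentP eK).
  by apply: (subsetP sHNK); apply: mem_quotient.
pose W := [set z in N | z ^+ 2 == 1].
have gW : group_set W.
  apply/group_setP; split; first by rewrite inE group1 expg1n eqxx.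
  move=> y z; rewrite !inE => /andP[Ny /eqP y2] /andP[Nz /eqP z2].
  have cyz : commute y z by exact: (centsP (cyclic_abelian cN)) y Ny z Nz.
  by rewrite groupM // expgMn // y2 z2 mulg1 eqxx.
pose WG := Group gW.
have sWN : WG \subset N by apply/subsetP=> z; rewrite inE => /andP[].
have sH'W : [~: H, H] \subset WG.
  rewrite /commutator gen_subG; apply/subsetP=> _ /imset2P[x y Hx Hy ->].
  have Nc : [~ x, y] \in N by apply: (subsetP sH'N); apply: mem_commg.
  rewrite inE Nc /=.
  have cx : commute x [~ x, y] := (centsP cHN) x Hx _ Nc.
  have e : [~ x, y] ^ x = [~ x, y] by apply/conjg_fixP/commgP.
  have -> : [~ x, y] ^+ 2 = [~ x ^+ 2, y].
    by rewrite expgS expg1 commMgJ e.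
  apply/commgP; apply: commute_sym; exact: (centsP cHN) y Hy _ (sqN x Hx).
have cardW : #|WG| <= 2.
  have /cyclicP [w defW] : cyclic WG by apply: cyclicS cN.
  rewrite defW -orderE.
  have : w \in WG by rewrite defW cycle_id.
  rewrite inE => /andP[_ /eqP w2].
  by apply: dvdn_leq => //; rewrite order_dvdn w2.
have sH'G : [~: H, H] \subset G by rewrite -derg1 (subset_trans (der_sub 1 H)).
rewrite subsetI sH'G /=.
apply/centsP=> z Hz g Gg.
have Wz : z \in W by apply: (subsetP sH'W).
have Wzg : z ^ g \in W.
  move: Wz; rewrite !inE => /andP[Nz /eqP z2].
  by rewrite memJ_norm ?(subsetP nNG) //= Nz -conjXg z2 conj1g eqxx.
apply/commgP/conjg_fixP.
case: (eqVneq z 1) => [-> | nz]; first by rewrite conj1g.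
apply: contraTeq cardW => nzg; rewrite -ltnNge.
have : [set 1; z; z ^ g] \subset WG.
  by rewrite !subUset !sub1set group1 Wz Wzg.
move/subset_leq_card; apply: leq_trans.
rewrite -setUA cardsU1 !inE negb_or (eq_sym 1) nz (eq_sym 1) conjg_eq1 nz /= cards2.
by rewrite eq_sym nzg.
Qed.

Lemma small_ab (gT : finGroupType) (K : {group gT}) :
  #|K| <= 4 -> abelian K /\ (cyclic K \/ exponent K %| 2).
Proof.
move=> le4.
have pr_cyc : prime #|K| -> abelian K /\ (cyclic K \/ exponent K %| 2).
  by move=> pK; have cK := prime_cyclic pK; split; [exact: cyclic_abelian | left].
have := cardG_gt0 K.
case e: #|K| le4 => [|[|[|[|[|n]]]]] // _ _.
- have K1 : K :=: 1 by apply: card_le1_trivg; rewrite e.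
  by rewrite K1; split; [exact: abelian1 | left; exact: cyclic1].
- by apply: pr_cyc; rewrite e.
- by apply: pr_cyc; rewrite e.
have aK : abelian K by apply: (@card_p2group_abelian _ 2); rewrite ?e.
split=> //.
have [x Kx ex] := exponent_witness (abelian_nil aK).
have : exponent K %| 4 by rewrite -e exponent_dvdn.
rewrite ex.
have := order_gt0 x.
have : #[x] <= 4 by rewrite -e; apply: dvdn_leq => //; exact: order_dvdG.
case ox: #[x] => [|[|[|[|[|m]]]]] //= _ _ _; try by right.
left; apply/cyclicP; exists x; apply/eqP; rewrite eq_sym eqEcard cycle_subG Kx /=.
by rewrite -orderE e ox.
Qed.

Lemma sq_index2 (gT : finGroupType) (M D : {group gT}) y :
  D \subset M -> #|M : D| = 2 -> y \in M -> y ^+ 2 \in D.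
Proof.
move=> sDM iMD My.
have /andP[_ nDM] := index2_normal sDM iMD.
have Ny : y \in 'N(D) by apply: (subsetP nDM).
apply: coset_idr; first by rewrite groupX.
rewrite morphX // -iMD -card_quotient //.
by apply: expg_cardG; apply: mem_quotient.
Qed.

Lemma absQ_small (gT : finGroupType) (Q K : {group gT}) :
  Q^`(1) \subset K -> #|K| <= 4 ->
  exists K : {group gT}, [/\ Q^`(1) \subset K, abelian K & (cyclic K \/ exponent K %| 2)].
Proof.
move=> sQK le4; have [aK hK] := small_ab le4.
by exists K; split.
Qed.

Lemma absQ (gT : finGroupType) (Q D : {group gT}) :
  D \subset Q -> cyclic D -> gcore D Q = 1 -> #|Q : D| <= 4 ->
  exists K : {group gT}, [/\ Q^`(1) \subset K, abelian K & (cyclic K \/ exponent K %| 2)].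
Proof.
move=> sDQ cD core1 le4.
have aD := cyclic_abelian cD.
have core_sub : forall L : {group gT}, L \subset D -> Q \subset 'N(L) -> L :=: 1.
  move=> L sLD nLQ; apply/trivgP; rewrite -core1; exact: gcore_max.
have [nDQ | nDQ] := boolP (Q \subset 'N(D)).
  have D1 := core_sub D (subxx _) nDQ.
  apply: (@absQ_small _ Q Q); first exact: der_sub.
  by rewrite -indexg1 -D1.
have [/existsP [M /andP [pDM pMQ]] | noM] :=
  boolP [exists M : {group gT}, (D \proper M) && (M \proper Q)].
  have sDM := proper_sub pDM; have sMQ := proper_sub pMQ.
  have i1 : 1 < #|Q : M| by rewrite indexg_gt1 proper_subn.
  have i2 : 1 < #|M : D| by rewrite indexg_gt1 proper_subn.
  have := Lagrange_index sMQ sDM => eL.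
  have iQM : #|Q : M| = 2 by nia.
  have iMD : #|M : D| = 2 by nia.
  have /andP [_ nMQ] := index2_normal sMQ iQM.
  have /andP [_ nDM] := index2_normal sDM iMD.
  exists M; split.
  - apply: (der1_min nMQ); apply: cyclic_abelian; apply: prime_cyclic.
    by rewrite card_quotient // iQM.
  - apply/derG1P; apply: (core_sub [group of M^`(1)]).
      by apply: (der1_min nDM); apply: cyclic_abelian; apply: prime_cyclic; rewrite card_quotient // iMD.
    exact: (char_norm_trans (der_char 1 M) nMQ).
  - right; apply/exponentP => x Mx.
    suff : x ^+ 2 \in gcore D Q by rewrite core1 => /set1P.
    apply/bigcapP => g Qg.
    rewrite mem_conjg conjXg; apply: sq_index2 sDM iMD _.
    by rewrite memJ_norm // groupV (subsetP nMQ).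
have maxD : forall M : {group gT}, D \subset M -> M \subset Q -> M :=: D \/ M :=: Q.
  move=> M sDM sMQ; case: (eqVneq (M : {set gT}) D) => [-> | nMD]; first by left.
  case: (eqVneq (M : {set gT}) Q) => [-> | nMQ]; first by right.
  case/negP: noM; apply/existsP; exists M.
  by rewrite !properEneq sDM sMQ nMQ eq_sym nMD.
have ntD : D :!=: 1.
  by apply: contraNneq nDQ => ->; rewrite norm1 subsetT.
have nDQ' : 'N_Q(D) = D.
  have sDN : D \subset 'N_Q(D) by rewrite subsetI sDQ normG.
  have [//|eN] := maxD [group of 'N_Q(D)] sDN (subsetIl _ _).
  by case/negP: nDQ; rewrite -eN subsetIr.
have cent : forall x, x \in D -> x != 1 -> 'C_Q[x] = D.
  move=> x Dx ntx.
  have sDC : D \subset 'C_Q[x] by rewrite subsetI sDQ sub_cent1 (subsetP aD x Dx).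
  have [//|CQ] := maxD [group of 'C_Q[x]] sDC (subsetIl _ _).
  have nXQ : Q \subset 'N(<[x]>).
    by apply: cents_norm; rewrite cent_cycle -CQ subsetIr.
  have := core_sub [group of <[x]>] _ nXQ; rewrite cycle_subG => /(_ Dx) /eqP.
  by rewrite cycle_eq1 (negbTE ntx).
have TI : forall a g, a \in D -> a != 1 -> g \in Q -> a ^ g \in D -> g \in D.
  move=> a g Da nta Qg Dag.
  have e : 'C_Q[a ^ g] = D by apply: cent; rewrite ?conjg_eq1.
  rewrite cent1J -{1}(conjGid Qg) -conjIg (cent a Da nta) in e.
  by rewrite -nDQ' inE Qg /=; apply/normP.
set k := #|Q : D|.
have nsQD : ~~ (Q \subset D) by apply: contra nDQ => sQD; apply: subset_trans sQD (normG D).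
have k1 : 1 < k by rewrite indexg_gt1.
have k2 : k != 2.
  by apply: contra nDQ => /eqP i2; case/andP: (index2_normal sDQ i2).
have [g Qg nDg] := subsetPn nsQD.
have dle : #|D| <= k - 1.
  pose f := fun d => D :* (g * d).
  have injf : {in D &, injective f}.
    move=> d1 d2 D1 D2 /rcoset_eqP; rewrite mem_rcoset invMg => h.
    apply/eqP; rewrite eq_mulgV1; apply/negPn/negP => nt.
    case/negP: nDg; rewrite -groupV.
    apply: (TI (d1 * d2^-1)) => //; first by rewrite groupM ?groupV.
      by rewrite groupV.
    by rewrite conjgE invgK !mulgA; rewrite !mulgA in h.
  have sfD : f @: D \subset rcosets D Q :\ (gval D).
    apply/subsetP => _ /imsetP[d Dd ->]; rewrite !inE.
    apply/andP; split.
      apply/eqP => eD; case/negP: nDg.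
      have := rcoset_refl D (g * d); rewrite /f in eD; rewrite eD.
      by rewrite groupMr.
    by rewrite /f -rcosetE imset_f // groupM // (subsetP sDQ).
  rewrite -(card_in_imset injf); apply: (leq_trans (subset_leq_card sfD)).
  have : gval D \in rcosets D Q by rewrite -{1}(rcoset1 D) -rcosetE imset_f.
  by rewrite /k /indexg (cardsD1 (gval D) (rcosets D Q)) => ->; rewrite add1n subn1.
have D2 : 1 < #|D| by rewrite cardG_gt1.
have cardQ : #|Q| = (#|D| * k)%N by rewrite Lagrange.
have k34 : k = 3 \/ k = 4.
  by move: k1 k2 le4; rewrite /k; case: #|Q : D| => [|[|[|[|[|n]]]]] //; auto.
case: k34 => ek.
  have eD : #|D| = 2 by move: dle D2; rewrite ek; case: #|D| => [|[|[|n]]].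
  have cQ : #|Q| = 6 by rewrite cardQ eD ek.
  have [P sylP] := Sylow_exists 3 Q.
  have sPQ := pHall_sub sylP.
  have cP : #|P| = 3 by rewrite (card_Hall sylP) cQ p_part.
  have iQP : #|Q : P| = 2.
    by apply/eqP; rewrite -(eqn_pmul2l (cardG_gt0 P)) Lagrange // cP cQ.
  have /andP [_ nPQ] := index2_normal sPQ iQP.
  apply: (@absQ_small _ Q P); last by rewrite cP.
  apply: (der1_min nPQ); apply: cyclic_abelian; apply: prime_cyclic.
  by rewrite card_quotient // iQP.
have eD : #|D| = 3.
  move: dle D2; rewrite ek; case eD: #|D| => [|[|[|[|n]]]] // _ _.
  have pQ : 2.-group Q by rewrite /pgroup cardQ eD ek.
  have maxl : maximal D Q.
    apply/maxgroupP; split.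
      by rewrite properEneq sDQ andbT; apply: contraNneq nsQD => ->.
    move=> M /andP [sMQ nQM] sDM.
    have [//|eMQ] := maxD M sDM sMQ.
    by case/negP: nQM; rewrite eMQ subxx.
  by move: (p_maximal_index pQ maxl); rewrite -/k ek.
have cQ : #|Q| = 12 by rewrite cardQ eD ek.
have [P sylP] := Sylow_exists 2 Q.
have sPQ := pHall_sub sylP.
have cP : #|P| = 4 by rewrite (card_Hall sylP) cQ p_part.
have iQP : #|Q : P| = 3.
  by apply/eqP; rewrite -(eqn_pmul2l (cardG_gt0 P)) Lagrange // cP cQ.
have TI' : normedTI D^# Q D.
  apply/normedTI_memJ_P; split=> //.
    by rewrite setD_eq0 subG1.
  move=> a h /setD1P [nta Da] Qh; rewrite !inE conjg_eq1 nta /=.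
  apply/idP/idP => [Dah | Dh]; first exact: (TI a).
  by rewrite memJ_norm // (subsetP (normG D)).
set X := class_support D^# Q.
have cX : #|X| = 8.
  rewrite (card_support_normedTI TI') -/k ek.
  have := cardsD1 1 D; rewrite group1 eD add1n => [[<-]] //.
have sXQ : X \subset Q.
  by apply: class_support_subG; apply: subset_trans (subsetDl _ _) sDQ.
have oX : forall x, x \in X -> #[x] = 3.
  move=> _ /imset2P [a h Da Qh ->]; rewrite orderJ.
  case/setD1P: Da => nta Da.
  have o3 : #[a] %| 3 by rewrite -eD order_dvdG.
  have o1 : #[a] != 1%N by rewrite order_eq1.
  move: o3 o1 (order_gt0 a); case: #[a] => [|[|[|[|n]]]] //.
set Y := Q :\: X.
have cY : #|Y| = 4 by rewrite cardsD (setIidPr sXQ) cQ cX.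
have sPgY : forall g, g \in Q -> P :^ g \subset Y.
  move=> g1 Qg1; apply/subsetP => y Py; rewrite inE.
  have Py' : y ^ g1^-1 \in P by rewrite -mem_conjg.
  have Qy : y \in Q by rewrite -(conjgKV g1 y) groupJ // (subsetP sPQ).
  rewrite Qy andbT; apply/negP => Xy.
  have h4 : #[y] %| 4 by rewrite -(orderJ y g1^-1) -cP order_dvdG.
  by rewrite (oX y Xy) in h4.
have eY : forall g, g \in Q -> P :^ g :=: Y.
  by move=> g1 Qg1; apply/eqP; rewrite eqEcard sPgY // cardJg cP cY.
have nPQ : Q \subset 'N(P).
  apply/subsetP => g1 Qg1; apply/normP.
  by rewrite eY // -(eY 1 (group1 _)) conjsg1.
apply: (@absQ_small _ Q P); last by rewrite cP.
apply: (der1_min nPQ); apply: cyclic_abelian; apply: prime_cyclic.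
by rewrite card_quotient // iQP.
Qed.

Lemma main_lemma (gT : finGroupType) (G C : {group gT}) :
  C \subset G -> cyclic C -> #|G : C| <= 4 ->
  [~: G^`(1), G^`(1)] \subset 'Z(G).
Proof.
move=> sCG cC le4.
set N := [group of gcore C G].
have nsNG : N <| G := gcore_normal sCG.
have sNC : N \subset C := gcore_sub C G.
have cN : cyclic N := cyclicS sNC cC.
have nNG := normal_norm nsNG.
have nsNC : N <| C := normalS sNC sCG nsNG.
have sCGq : C / N \subset G / N := quotientS N sCG.
have core1 : gcore (C / N) (G / N) = 1.
  set L := [group of gcore (C / N) (G / N)].
  have nsL : L <| G / N := gcore_normal sCGq.
  have sLC : L \subset C / N := gcore_sub _ _.
  set pre := [group of coset N @*^-1 L].
  have nspre : pre <| G by rewrite -(quotientGK nsNG) cosetpre_normal.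
  have spreC : pre \subset C.
    by rewrite -(quotientGK nsNC); apply: morphpreS.
  have spreN : pre \subset N := gcore_max spreC (normal_norm nspre).
  apply/trivgP; rewrite -(trivg_quotient N) -[gval L](cosetpreK L).
  exact: quotientS.
have iq : #|G / N : C / N| <= 4.
  rewrite index_quotient_eq //.
  exact: subset_trans (subsetIr _ _) sNC.
have [K [sK aK hK]] := absQ sCGq (quotient_cyclic N cC) core1 iq.
exact: final_step nsNG cN sK aK hK.
Qed.

Theorem proposition2p6 :
  (forall (gT : finGroupType) (G : {group gT}),
     2.-group G ->
     (exists C : {group gT}, [/\ C \subset G, cyclic C & #|G : C| = 4%N]) ->
     [~: G^`(1), G^`(1)] \subset 'Z(G)) /\
  (forall (gT : finGroupType) (G : {group gT}),
     (exists a b : nat, #|G| = (2 ^ a * 3 ^ b)%N) ->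
     (exists C : {group gT}, [/\ C \subset G, cyclic C & #|G : C| < 6]) ->
     [~: G^`(1), G^`(1)] \subset 'Z(G)).
Proof.
split.
  move=> gT G _ [C [sCG cC iC]].
  by apply: (main_lemma sCG cC); rewrite iC.
move=> gT G [a [b cG]] [C [sCG cC iC]].
apply: (main_lemma sCG cC).
have hd := dvdn_indexg G C.
move: iC hd; case: #|G : C| => [|[|[|[|[|[|n]]]]]] // _.
rewrite cG Euclid_dvdM // !Euclid_dvdX //.
Qed.
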